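(* For every integer $n\ge 1$, $$\Phi^{(1)}[aq^n; b, b'; c; x, y] = \Phi^{(1)}[a; b, b'; c; x, y] + \frac{ax(1-b)}{1-c} \sum_{k=1}^n q^{k-1} \Phi^{(1)}[aq^k; bq, b'; cq; x, y] + \frac{ay(1-b')}{1-c} \sum_{k=1}^n q^{k-1} \Phi^{(1)}[aq^k; b, b'q; cq; xq, y]$$ and $$\Phi^{(1)}[aq^{-n}; b, b'; c; x, y] = \Phi^{(1)}[a; b, b'; c; x, y] - \frac{ax(1-b)}{1-c} \sum_{k=1}^n q^{-k} \Phi^{(1)}[aq^{1-k}; bq, b'; cq; x, y] - \frac{ay(1-b')}{1-c} \sum_{k=1}^n q^{-k} \Phi^{(1)}[aq^{1-k}; b, b'q; cq; xq, y].$$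
   Context: Let $q$ be a complex number with $0<|q|<1$. For complex $z$ and integer $m\ge 0$, $(z;q)_m=\prod_{j=0}^{m-1}(1-zq^j)$, with $(z;q)_0=1$. The $q$-Appell function $\Phi^{(1)}$ is $$\Phi^{(1)}[a; b, b'; c; x, y] = \sum_{m, n \geq 0} \frac{(a; q)_{m+n} (b; q)_m (b'; q)_n}{(q; q)_m (q; q)_n (c; q)_{m+n}} x^m y^n.$$ Identities are understood as identities of power series in $x,y$ (formal, or convergent for small $|x|,|y|$), with complex parameters $a,b,b',c$ chosen so that no denominator occurring vanishes. *)

(* Defs.v *)
From mathcomp Require Import all_boot all_order all_algebra.
From mathcomp Require Import complex.
From mathcomp Require Import reals.
Set Implicit Arguments. Unset Strict Implicit. Unset Printing Implicit Defensive.
Import Order.TTheory GRing.Theory Num.Theory.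
Local Open Scope ring_scope.

Definition qpoch (C : ringType) (q z : C) (m : nat) : C :=
  \prod_(j < m) (1 - z * q ^+ j).

(* Formal power series in two variables x, y, given by their coefficients:
   F m n is the coefficient of x^m y^n. *)
Definition ps2 (C : Type) := nat -> nat -> C.

Definition ps_add (C : ringType) (F G : ps2 C) : ps2 C := fun m n => F m n + G m n.
Definition ps_sub (C : ringType) (F G : ps2 C) : ps2 C := fun m n => F m n - G m n.
Definition ps_scale (C : ringType) (k : C) (F : ps2 C) : ps2 C := fun m n => k * F m n.
Definition ps_mulx (C : ringType) (F : ps2 C) : ps2 C :=
  fun m n => if m is m'.+1 then F m' n else 0.
Definition ps_muly (C : ringType) (F : ps2 C) : ps2 C :=
  fun m n => if n is n'.+1 then F m n' else 0.
Definition ps_substx (C : ringType) (q : C) (F : ps2 C) : ps2 C :=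
  fun m n => q ^+ m * F m n.
Definition ps_sum1 (C : ringType) (N : nat) (G : nat -> ps2 C) : ps2 C :=
  fun m n => \sum_(1 <= k < N.+1) G k m n.

Definition phi1 (C : fieldType) (q a b b' c : C) : ps2 C :=
  fun m n => qpoch q a (m + n) * qpoch q b m * qpoch q b' n
             / (qpoch q q m * qpoch q q n * qpoch q c (m + n)).

(* Main.v *)
Require Import Defs.
From mathcomp Require Import all_boot all_order all_algebra.
From mathcomp Require Import complex.
From mathcomp Require Import reals.
From mathcomp Require Import ring.
From Stdlib Require Import FunctionalExtensionality.
Import Order.TTheory GRing.Theory Num.Theory.
Local Open Scope ring_scope.

Lemma qpochS_l (F : fieldType) (q z : F) m :
  qpoch q z m.+1 = (1 - z) * qpoch q (z * q) m.
Proof.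
rewrite /qpoch big_ord_recl expr0 mulr1; congr (_ * _).
by apply eq_bigr => i _; rewrite lift0 exprS mulrA.
Qed.

Lemma qpochS_r (F : fieldType) (q z : F) m :
  qpoch q z m.+1 = qpoch q z m * (1 - z * q ^+ m).
Proof. by rewrite /qpoch big_ord_recr. Qed.

Arguments qpochS_l {F}.
Arguments qpochS_r {F}.

Lemma qpoch0 (F : fieldType) (q z : F) : qpoch q z 0 = 1.
Proof. by rewrite /qpoch big_ord0. Qed.

Lemma qpoch_qq (F : fieldType) (q : F) (qq : forall j, 1 - q ^+ j.+1 != 0) m :
  qpoch q q m != 0.
Proof.
elim: m => [|m IH]; first by rewrite qpoch0 oner_neq0.
by rewrite qpochS_r mulf_neq0 // -exprS qq.
Qed.

Lemma qpoch_cq (F : fieldType) (q c : F) (hc : forall j, 1 - c * q ^+ j != 0) m :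
  qpoch q (c * q) m != 0.
Proof.
elim: m => [|m IH]; first by rewrite qpoch0 oner_neq0.
by rewrite qpochS_r mulf_neq0 // -mulrA -exprS hc.
Qed.

Arguments qpoch_qq {F q}.
Arguments qpoch_cq {F q c}.

Lemma xterm (F : fieldType) (q al b b' c : F) m n t
  (qq : forall j, 1 - q ^+ j.+1 != 0) (hc : forall j, 1 - c * q ^+ j != 0) :
  (m + n = t.+1)%N ->
  al * (1 - b) / (1 - c) * ps_mulx (phi1 q (al * q) (b * q) b' (c * q)) m n =
  al * qpoch q (al * q) t * qpoch q b m * qpoch q b' n * (1 - q ^+ m)
   / ((1 - c) * qpoch q q m * qpoch q q n * qpoch q (c * q) t).
Proof.
have c0 : 1 - c != 0 by have := hc 0%N; rewrite expr0 mulr1.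
case: m => [|m] /= H; first by rewrite expr0 subrr !(mulr0, mul0r).
move: H; rewrite addSn => -[H].
rewrite /phi1 H qpochS_l (qpochS_r q q m).
have := qpoch_qq qq m; have := qpoch_qq qq n; have := qpoch_cq hc t.
have := qq m; rewrite exprS.
move=> h1 h2 h3 h4; field.
by rewrite ?h1 ?h2 ?h3 ?h4 ?c0.
Qed.

Lemma yterm (F : fieldType) (q al b b' c : F) m n t
  (qq : forall j, 1 - q ^+ j.+1 != 0) (hc : forall j, 1 - c * q ^+ j != 0) :
  (m + n = t.+1)%N ->
  al * (1 - b') / (1 - c) *
    ps_muly (ps_substx q (phi1 q (al * q) b (b' * q) (c * q))) m n =
  al * q ^+ m * qpoch q (al * q) t * qpoch q b m * qpoch q b' n * (1 - q ^+ n)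
   / ((1 - c) * qpoch q q m * qpoch q q n * qpoch q (c * q) t).
Proof.
have c0 : 1 - c != 0 by have := hc 0%N; rewrite expr0 mulr1.
case: n => [|n] /= H; first by rewrite expr0 subrr !(mulr0, mul0r).
move: H; rewrite addnS => -[H].
rewrite /ps_substx /phi1 H qpochS_l (qpochS_r q q n).
have := qpoch_qq qq m; have := qpoch_qq qq n; have := qpoch_cq hc t.
have := qq n; rewrite exprS.
move=> h1 h2 h3 h4; field.
by rewrite ?h1 ?h2 ?h3 ?h4 ?c0.
Qed.

Lemma step (F : fieldType) (q al al' b b' c : F) m n
  (qq : forall j, 1 - q ^+ j.+1 != 0) (hc : forall j, 1 - c * q ^+ j != 0) :
  al' = al * q ->
  phi1 q al' b b' c m n = phi1 q al b b' c m n
   + al * (1 - b) / (1 - c) * ps_mulx (phi1 q al' (b * q) b' (c * q)) m n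
   + al * (1 - b') / (1 - c) *
       ps_muly (ps_substx q (phi1 q al' b (b' * q) (c * q))) m n.
Proof.
move=> ->.
have c0 : 1 - c != 0 by have := hc 0%N; rewrite expr0 mulr1.
case E: (m + n)%N => [|t].
  move/eqP: E; rewrite addn_eq0 => /andP[/eqP-> /eqP->].
  by rewrite /phi1 /= !qpoch0 !mulr0 !addr0.
rewrite (@xterm _ q al b b' c m n t qq hc E) (@yterm _ q al b b' c m n t qq hc E).
rewrite /phi1 E (qpochS_r q (al * q)) (qpochS_l q al) (qpochS_l q c).
have eq : q ^+ t.+1 = q ^+ m * q ^+ n by rewrite -exprD E.
rewrite -(mulrA al) -exprS eq.
have := qpoch_qq qq m; have := qpoch_qq qq n; have := qpoch_cq hc t.
move=> h1 h2 h3; field.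
by rewrite ?h1 ?h2 ?h3 ?c0.
Qed.

Lemma mulx_sum (F : fieldType) N (s : nat -> F) (G : nat -> ps2 F) m n :
  ps_mulx (ps_sum1 N (fun k => ps_scale (s k) (G k))) m n =
  \sum_(1 <= k < N.+1) s k * ps_mulx (G k) m n.
Proof.
rewrite /ps_mulx /ps_sum1 /ps_scale; case: m => [|m] //.
by rewrite big1 // => k _; rewrite mulr0.
Qed.

Lemma muly_sum (F : fieldType) N (s : nat -> F) (G : nat -> ps2 F) m n :
  ps_muly (ps_sum1 N (fun k => ps_scale (s k) (G k))) m n =
  \sum_(1 <= k < N.+1) s k * ps_muly (G k) m n.
Proof.
rewrite /ps_muly /ps_sum1 /ps_scale; case: n => [|n] //.
by rewrite big1 // => k _; rewrite mulr0.
Qed.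

Lemma posN (F : fieldType) (q a b b' c : F)
  (qq : forall j, 1 - q ^+ j.+1 != 0) (hc : forall j, 1 - c * q ^+ j != 0) N m n :
  phi1 q (a * q ^+ N) b b' c m n = phi1 q a b b' c m n
   + a * (1 - b) / (1 - c) * \sum_(1 <= k < N.+1) q ^+ k.-1 *
        ps_mulx (phi1 q (a * q ^+ k) (b * q) b' (c * q)) m n
   + a * (1 - b') / (1 - c) * \sum_(1 <= k < N.+1) q ^+ k.-1 *
        ps_muly (ps_substx q (phi1 q (a * q ^+ k) b (b' * q) (c * q))) m n.
Proof.
elim: N => [|N IH].
  by rewrite expr0 mulr1 !big_geq // !mulr0 !addr0.
rewrite (@step _ q (a * q ^+ N) _ b b' c m n qq hc); last by rewrite exprSr mulrA.
rewrite !(big_nat_recr N.+1) //= IH; ring.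
Qed.

Lemma negN (F : fieldType) (q a b b' c : F) (q0 : q != 0)
  (qq : forall j, 1 - q ^+ j.+1 != 0) (hc : forall j, 1 - c * q ^+ j != 0) N m n :
  phi1 q (a * q ^ (- (N%:Z))) b b' c m n = phi1 q a b b' c m n
   - a * (1 - b) / (1 - c) * \sum_(1 <= k < N.+1) q ^ (- (k%:Z)) *
        ps_mulx (phi1 q (a * q ^ (1 - k%:Z)) (b * q) b' (c * q)) m n
   - a * (1 - b') / (1 - c) * \sum_(1 <= k < N.+1) q ^ (- (k%:Z)) *
        ps_muly (ps_substx q (phi1 q (a * q ^ (1 - k%:Z)) b (b' * q) (c * q))) m n.
Proof.
elim: N => [|N IH].
  by rewrite oppr0 expr0z mulr1 !big_geq // !mulr0 !subr0.
have e1 : (1 - (N.+1)%:Z) = - (N%:Z) by rewrite -addn1 PoszD; ring.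
have e2 : a * q ^ (- (N%:Z)) = a * q ^ (- ((N.+1)%:Z)) * q.
  rewrite -mulrA; congr (_ * _).
  rewrite -{3}(expr1z q) -expfzDr //; congr (q ^ _).
  by rewrite -addn1 PoszD; ring.
have H := @step _ q (a * q ^ (- ((N.+1)%:Z))) _ b b' c m n qq hc e2.
rewrite !(big_nat_recr N.+1) //= e1.
rewrite (_ : phi1 q (a * q ^ (- ((N.+1)%:Z))) b b' c m n =
   phi1 q (a * q ^ (- (N%:Z))) b b' c m n
   - a * q ^ (- ((N.+1)%:Z)) * (1 - b) / (1 - c) *
       ps_mulx (phi1 q (a * q ^ (- (N%:Z))) (b * q) b' (c * q)) m n
   - a * q ^ (- ((N.+1)%:Z)) * (1 - b') / (1 - c) *
       ps_muly (ps_substx q (phi1 q (a * q ^ (- (N%:Z))) b (b' * q) (c * q))) m n);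
  last by rewrite H; ring.
rewrite IH; ring.
Qed.

Theorem theorem1 (R : realType) (q a b b' c : complex R) (N : nat)
  (hq0 : 0 < `|q|) (hq1 : `|q| < 1)
  (hc : forall j : nat, 1 - c * q ^+ j != 0)
  (hN : (1 <= N)%N) :
  phi1 q (a * q ^+ N) b b' c =
    ps_add
      (ps_add (phi1 q a b b' c)
         (ps_scale (a * (1 - b) / (1 - c))
            (ps_mulx (ps_sum1 N (fun k =>
               ps_scale (q ^+ k.-1) (phi1 q (a * q ^+ k) (b * q) b' (c * q)))))))
      (ps_scale (a * (1 - b') / (1 - c))
         (ps_muly (ps_sum1 N (fun k =>
            ps_scale (q ^+ k.-1)
              (ps_substx q (phi1 q (a * q ^+ k) b (b' * q) (c * q)))))))
  /\
  phi1 q (a * q ^ (- (N%:Z))) b b' c =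
    ps_sub
      (ps_sub (phi1 q a b b' c)
         (ps_scale (a * (1 - b) / (1 - c))
            (ps_mulx (ps_sum1 N (fun k =>
               ps_scale (q ^ (- (k%:Z)))
                 (phi1 q (a * q ^ (1 - k%:Z)) (b * q) b' (c * q)))))))
      (ps_scale (a * (1 - b') / (1 - c))
         (ps_muly (ps_sum1 N (fun k =>
            ps_scale (q ^ (- (k%:Z)))
              (ps_substx q (phi1 q (a * q ^ (1 - k%:Z)) b (b' * q) (c * q))))))).
Proof.
have q0 : q != 0 by rewrite -normr_gt0.
have qq : forall j, 1 - q ^+ j.+1 != 0.
  move=> j; rewrite subr_eq0; apply/eqP => h.
  have := exprn_ilt1 j.+1 (normr_ge0 q) hq1.
  by rewrite -normrX -h normr1 ltxx.
split; apply: functional_extensionality => m;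
  apply: functional_extensionality => n.
  by rewrite /ps_add /ps_scale mulx_sum muly_sum posN.
by rewrite /ps_sub /ps_scale mulx_sum muly_sum negN.
Qed.
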